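(* Let $\sigma>0$ and let $\mu_1,\dots,\mu_n,\mu_1^*,\dots,\mu_n^*\in\mathbb{R}$. Let $X_1,\dots,X_n$ be independent random variables with $X_i\sim \mathrm{Gum}(\mu_i,\sigma)$, and let $Y_1,\dots,Y_n$ be independent random variables with $Y_i\sim \mathrm{Gum}(\mu_i^*,\sigma)$, $i=1,\dots,n$. Let $X_{n:n}=\max\{X_1,\dots,X_n\}$ and $Y_{n:n}=\max\{Y_1,\dots,Y_n\}$. If $(\mu_1,\dots,\mu_n)\succeq^{m}(\mu_1^*,\dots,\mu_n^* )$, then $X_{n:n}\geq_{rh} Y_{n:n}$.
   Context: A random variable $X$ has the Gumbel distribution $\mathrm{Gum}(\mu,\sigma)$ (location $\mu\in\mathbb{R}$, scale $\sigma>0$) if its cumulative distribution function is $F(x)=e^{-e^{-(x-\mu)/\sigma}}$, $x\in\mathbb{R}$. Majorization: for $\mathbf{u},\mathbf{v}\in\mathbb{R}^n$ with components arranged in decreasing order $u_{(1)}\geq\dots\geq u_{(n)}$ and $v_{(1)}\geq\dots\geq v_{(n)}$, $\mathbf{u}\succeq^{m}\mathbf{v}$ means $\sum_{i=1}^k u_{(i)}\geq\sum_{i=1}^k v_{(i)}$ for $k=1,\dots,n-1$ and $\sum_{i=1}^n u_{(i)}=\sum_{i=1}^n v_{(i)}$. For a continuous random variable $X$ with density $f_X$ and cdf $F_X$, its reversed hazard rate is $\tilde r_X=f_X/F_X$; $X\leq_{rh}Y$ means $\tilde r_X(x)\leq\tilde r_Y(x)$ for all $x\in\mathbb{R}$,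 and $X\geq_{rh}Y$ means $Y\leq_{rh}X$. *)

(* Defs.v *)
From HB Require Import structures.
From mathcomp Require Import all_boot all_order all_algebra.
From mathcomp Require Import all_classical all_reals all_analysis.
Set Implicit Arguments. Unset Strict Implicit. Unset Printing Implicit Defensive.
Import Order.TTheory GRing.Theory Num.Theory.
Import numFieldNormedType.Exports.
Local Open Scope classical_set_scope.
Local Open Scope ring_scope.

Definition mutually_independent (R : realType) (d : measure_display)
  (T : measurableType d) (P : probability T R) (n : nat)
  (X : 'I_n -> {RV P >-> R}) : Prop :=
  forall (J : {set 'I_n}) (B : 'I_n -> set R),
    (forall i, measurable (B i)) ->
    P (\big[setI/setT]_(i in J) (X i @^-1` B i)) =
    (\prod_(i in J) P (X i @^-1` B i))%E.

Definition cdf_of (R : realType) (d : measure_display)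
  (T : measurableType d) (P : probability T R) (Z : T -> R) (x : R) : R :=
  fine (P [set w | Z w <= x]).

Definition gumbel_cdf (R : realType) (mu sigma x : R) : R :=
  expR (- expR (- ((x - mu) / sigma))).

Definition is_gumbel (R : realType) (d : measure_display)
  (T : measurableType d) (P : probability T R) (Z : T -> R) (mu sigma : R) : Prop :=
  forall x, cdf_of P Z x = gumbel_cdf mu sigma x.

Definition max_of (R : realType) (T : Type) (n : nat) (X : 'I_n.+1 -> T -> R)
  (w : T) : R := \big[Num.max/X ord0 w]_(i < n.+1) X i w.

Definition rev_hazard (R : realType) (F : R -> R) (x : R) : R :=
  derive1 F x / F x.

Definition rh_le (R : realType) (FX FY : R -> R) : Prop :=
  (forall x, derivable FX x 1) /\ (forall x, derivable FY x 1) /\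
  (forall x, rev_hazard FX x <= rev_hazard FY x).

Definition dec_sort (R : realType) (n : nat) (u : 'I_n -> R) : seq R :=
  sort (fun a b => b <= a) [seq u i | i <- enum 'I_n].

Definition majorizes (R : realType) (n : nat) (u v : 'I_n -> R) : Prop :=
  (forall k : nat, (1 <= k < n)%N ->
     \sum_(i < k) nth 0 (dec_sort v) i <= \sum_(i < k) nth 0 (dec_sort u) i) /\
  \sum_(i < n) u i = \sum_(i < n) v i.

(* Main.v *)
From HB Require Import structures.
From mathcomp Require Import all_boot all_order all_algebra.
From mathcomp Require Import all_classical all_reals all_analysis.
Require Import Defs.
From mathcomp Require Import ring.
Import Order.TTheory GRing.Theory Num.Theory.
Local Open Scope classical_set_scope.
Local Open Scope ring_scope.
Lemma abel_nonneg (R : realType) (m : nat) (c d : nat -> R) :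
  (forall i, (i.+1 < m)%N -> c i.+1 <= c i) ->
  (forall k, (1 <= k < m)%N -> 0 <= \sum_(i < k) d i) ->
  \sum_(i < m) d i = 0 ->
  0 <= \sum_(i < m) c i * d i.
Proof.
move=> hc hD htot.
have claim : forall k, (k < m)%N -> c k * \sum_(i < k) d i <= \sum_(i < k) c i * d i.
  elim=> [|k IH] hk; first by rewrite !big_ord0 mulr0.
  rewrite !big_ord_recr /=.
  have hk' : (k < m)%N by apply: ltn_trans hk.
  have := IH hk'.
  have Dk : 0 <= \sum_(i < k.+1) d i.
    apply: hD; rewrite hk andbT //.
  rewrite big_ord_recr /= in Dk.
  move=> h.
  have h2 : c k.+1 * (\sum_(i < k) d i + d k) <= c k * (\sum_(i < k) d i + d k).
    by apply: ler_wpM2r => //; apply: hc.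
  apply: (le_trans h2); rewrite mulrDr; exact: lerD.
case: m hc hD htot claim => [|m] hc hD htot claim; first by rewrite big_ord0.
rewrite big_ord_recr /=.
have := claim m (ltnSn m).
rewrite big_ord_recr /= in htot.
move=> h.
have E : \sum_(i < m) d i = - d m by apply/eqP; rewrite -subr_eq0 opprK htot.
rewrite E mulrN in h.
by have := lerD h (lexx (c m * d m)); rewrite addNr.
Qed.

Lemma exp_major (R : realType) (m : nat) (s : R) (a b : nat -> R) :
  0 < s ->
  (forall i, (i.+1 < m)%N -> b i.+1 <= b i) ->
  (forall k, (1 <= k < m)%N -> \sum_(i < k) b i <= \sum_(i < k) a i) ->
  \sum_(i < m) a i = \sum_(i < m) b i ->
  \sum_(i < m) expR (b i / s) <= \sum_(i < m) expR (a i / s).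
Proof.
move=> s0 hb hk htot.
have key : forall i, expR (b i / s) + expR (b i / s) / s * (a i - b i) <= expR (a i / s).
  move=> i.
  have : expR (b i / s) * (1 + (a i - b i) / s) <= expR (b i / s) * expR ((a i - b i) / s).
    by apply: ler_wpM2l; [exact: ltW (expR_gt0 _)| exact: expR_ge1Dx].
  rewrite -expRD mulrDr mulr1 mulrBl addrCA subrr addr0.
  move=> H; apply: le_trans H; apply: lerD => //.
  rewrite le_eqVlt; apply/orP; left; apply/eqP.
  by ring.
have : 0 <= \sum_(i < m) (expR (b i / s) / s) * (a i - b i).
  apply: (@abel_nonneg R m (fun i => expR (b i / s) / s) (fun i => a i - b i)).
  - move=> i hi; apply: ler_wpM2r; first by rewrite invr_ge0 ltW.
    rewrite ler_expR; apply: ler_wpM2r; [by rewrite invr_ge0 ltW| exact: hb].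
  - by move=> k hk'; rewrite sumrB subr_ge0; apply: hk.
  - by rewrite sumrB htot subrr.
move=> h0.
rewrite -subr_ge0 -sumrB.
apply: (le_trans h0); apply: ler_sum => i _.
by rewrite lerBrDr addrC key.
Qed.
Lemma dec_sort_size (R : realType) n (u : 'I_n -> R) : size (dec_sort u) = n.
Proof. by rewrite /dec_sort size_sort size_map size_enum_ord. Qed.

Lemma sum_dec_sort (R : realType) n (u : 'I_n -> R) (f : R -> R) :
  \sum_(i < n) f (nth 0 (dec_sort u) i) = \sum_(i < n) f (u i).
Proof.
have hp : perm_eq (dec_sort u) [seq u i | i <- enum 'I_n] by rewrite /dec_sort perm_sort.
have -> : \sum_(i < n) f (nth 0 (dec_sort u) i) = \sum_(0 <= i < size (dec_sort u)) f (nth 0 (dec_sort u) i).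
  by rewrite (dec_sort_size _ _ u) big_mkord.
rewrite -(big_nth 0 xpredT f).
rewrite (perm_big _ hp) big_map.
by rewrite big_enum.
Qed.

Lemma dec_sort_dec (R : realType) n (u : 'I_n -> R) i :
  (i.+1 < n)%N -> nth 0 (dec_sort u) i.+1 <= nth 0 (dec_sort u) i.
Proof.
move=> hi.
have hs : sorted (fun a b : R => b <= a) (dec_sort u).
  by apply: sort_sorted => a b; exact: le_total.
have tr : transitive (fun a b : R => b <= a) by move=> y x z h1 h2; exact: le_trans h2 h1.
have Hsz := dec_sort_size R n u. apply: (sorted_ltn_nth tr 0 hs) => //; rewrite Hsz //; exact: ltnW.
Qed.
Lemma bigmax_le_iff (R : realType) (I : eqType) (r : seq I) (P : pred I) (F : I -> R) x0 x :
  (\big[Num.max/x0]_(i <- r | P i) F i <= x) <-> (x0 <= x /\ forall i, i \in r -> P i -> F i <= x).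
Proof.
elim: r => [|a r IH]; first by rewrite big_nil; split => // -[].
rewrite big_cons; case: ifP => Pa.
  rewrite ge_max; split.
    move=> /andP [h1 /IH [h2 h3]]; split => // i; rewrite inE => /orP [/eqP -> //|ir] Pi.
    by apply: h3.
  move=> [h0 h]; apply/andP; split; first by apply: h; rewrite ?inE ?eqxx.
  by apply/IH; split => // i ir Pi; apply: h; rewrite // inE ir orbT.
split.
  move=> /IH [h0 h]; split => // i; rewrite inE => /orP [/eqP ->|ir] Pi; first by rewrite Pa in Pi.
  by apply: h.
by move=> [h0 h]; apply/IH; split => // i ir Pi; apply: h; rewrite // inE ir orbT.
Qed.

Lemma bigsetI_iff (T : Type) (I : eqType) (r : seq I) (P : pred I) (F : I -> set T) w :
  (\big[setI/setT]_(i <- r | P i) F i) w <-> (forall i, i \in r -> P i -> F i w).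
Proof.
elim: r => [|a r IH]; first by rewrite big_nil; split.
rewrite big_cons; case: ifP => Pa.
  split.
    move=> [h1 h2] i; rewrite inE => /orP [/eqP -> //|ir] Pi.
    by apply IH.
  move=> h; split; first by apply: h; rewrite ?inE ?eqxx.
  by apply/IH => i ir Pi; apply: h; rewrite // inE ir orbT.
split.
  move=> h i; rewrite inE => /orP [/eqP ->|ir] Pi; first by rewrite Pa in Pi.
  by apply IH.
by move=> h; apply/IH => i ir Pi; apply: h; rewrite // inE ir orbT.
Qed.
Definition Gf (R : realType) (S s : R) (x : R) : R := expR (- (S * expR (- (x / s)))).
Arguments Gf {R}.

Lemma Gf_derive (R : realType) (S s x : R) :
  is_derive x 1 (Gf S s) (Gf S s x * (S * expR (- (x / s)) / s)).
Proof.
have h1 : is_derive x 1 (fun y : R => - (y / s)) (- s^-1).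
  have -> : (fun y : R => - (y / s)) = - (s^-1 \*: (@id R^o)).
    by apply/funext => y /=; rewrite /GRing.scale /= mulrC.
  have -> : - s^-1 = - (s^-1 *: (1:R^o)) by rewrite /GRing.scale /= mulr1.
  exact: is_deriveN.
have h2 : is_derive x 1 (fun y : R => - (S * expR (- (y / s)))) (- (S * (expR (- (x / s)) * - s^-1))).
  have -> : (fun y : R => - (S * expR (- (y / s)))) = - (S \*: (expR \o (fun y : R => - (y / s)))).
    by apply/funext => y /=.
  apply: is_deriveN.
have := @is_derive1_comp R expR (fun y : R => - (S * expR (- (y / s)))) x _ _ (is_derive_expR _) h2.
have -> : Gf S s = expR \o (fun y : R => - (S * expR (- (y / s)))) by [].
move=> H; apply: (is_derive_eq H).
by rewrite /Gf /= !mulrN opprK !mulrA.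
Qed.

Lemma cdf_max (R : realType) d (T : measurableType d) (P : probability T R) n (s : R)
  (mu : 'I_n.+1 -> R) (X : 'I_n.+1 -> {RV P >-> R}) :
  0 < s -> mutually_independent X -> (forall i, is_gumbel P (X i) (mu i) s) ->
  forall x, cdf_of P (max_of (fun i => (X i : T -> R))) x = Gf (\sum_i expR (mu i / s)) s x.
Proof.
move=> s0 ind hg x.
pose B := fun _ : 'I_n.+1 => [set` `]-oo, x]%R] : set R.
have mB : forall i, measurable (B i) by move=> i; exact: measurable_itv.
have e1 : [set w | max_of (fun i => X i : T -> R) w <= x] =
   \big[setI/setT]_(i in [set: 'I_n.+1]%SET) (X i @^-1` B i).
  apply/seteqP; split => w /=.
  - move=> /bigmax_le_iff [h0 h]; apply/bigsetI_iff => i _ _.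
    by rewrite /B /= in_itv /=; apply: h; rewrite ?mem_index_enum.
  - move=> /bigsetI_iff h; apply/bigmax_le_iff; split.
      have := h ord0; rewrite /B /= in_itv /= mem_index_enum; apply => //; by rewrite inE.
    by move=> i _ _; have := h i; rewrite /B /= in_itv /= mem_index_enum inE; apply.
rewrite /cdf_of e1 ind //.
have hp : forall i, P (X i @^-1` B i) = (gumbel_cdf (mu i) s x)%:E.
  move=> i.
  have e2 : X i @^-1` B i = [set w | X i w <= x].
    by apply/seteqP; split => w /=; rewrite /B /= in_itv.
  rewrite e2; have := hg i x; rewrite /cdf_of.
  have gp : 0 < gumbel_cdf (mu i) s x by rewrite /gumbel_cdf expR_gt0.
  case: (P _) => [r| |] /=; [by move->| |];
    by move=> h; move: gp; rewrite -h ltxx.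
under eq_bigr do rewrite hp.
rewrite prodEFin /=.
rewrite /Gf /gumbel_cdf.
rewrite -expR_sum mulr_suml -sumrN.
have -> : \sum_(i in [set: 'I_n.+1]%SET) - expR (- ((x - mu i) / s)) =
   \sum_(i < n.+1) - expR (- ((x - mu i) / s)).
  by apply: eq_bigl => i; rewrite inE.
congr expR; apply: eq_bigr => i _; congr (- _).
by rewrite -expRD; congr expR; rewrite mulrBl; ring.
Qed.

Local Close Scope classical_set_scope.

Theorem theorem3p2 (R : realType) (d : measure_display) (T : measurableType d)
  (P : probability T R) (n : nat) (sigma : R) (mu mus : 'I_n.+1 -> R)
  (X Y : 'I_n.+1 -> {RV P >-> R}) :
  0 < sigma ->
  mutually_independent X ->
  mutually_independent Y ->
  (forall i, is_gumbel P (X i) (mu i) sigma) ->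
  (forall i, is_gumbel P (Y i) (mus i) sigma) ->
  majorizes mu mus ->
  rh_le (cdf_of P (max_of (fun i => (Y i : T -> R))))
        (cdf_of P (max_of (fun i => (X i : T -> R)))).
Proof.
move=> s0 indX indY hX hY [hmaj htot].
have eX : cdf_of P (max_of (fun i => (X i : T -> R))) = Gf (\sum_i expR (mu i / sigma)) sigma.
  by apply/funext => x; exact: cdf_max.
have eY : cdf_of P (max_of (fun i => (Y i : T -> R))) = Gf (\sum_i expR (mus i / sigma)) sigma.
  by apply/funext => x; exact: cdf_max.
rewrite eX eY.
have hS : \sum_i expR (mus i / sigma) <= \sum_i expR (mu i / sigma).
  rewrite -(sum_dec_sort _ _ mu (fun t => expR (t / sigma))).
  rewrite -(sum_dec_sort _ _ mus (fun t => expR (t / sigma))).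
  have E1 := sum_dec_sort _ _ mu (fun t => t).
  have E2 := sum_dec_sort _ _ mus (fun t => t).
  simpl in E1, E2.
  apply: (@exp_major R n.+1 sigma (fun i => nth 0 (dec_sort mu) i) (fun i => nth 0 (dec_sort mus) i)) => //.
  - by move=> i hi; exact: dec_sort_dec.
  - by rewrite E1 E2.
have G0 : forall S x, Gf S sigma x != 0.
  by move=> S x; rewrite /Gf; apply: lt0r_neq0; exact: expR_gt0.
split; first by move=> x; case: (Gf_derive _ (\sum_i expR (mus i / sigma)) sigma x).
split; first by move=> x; case: (Gf_derive _ (\sum_i expR (mu i / sigma)) sigma x).
move=> x; rewrite /rev_hazard !derive1E.
rewrite (@derive_val _ _ _ _ _ _ _ (Gf_derive _ (\sum_i expR (mus i / sigma)) sigma x)).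
rewrite (@derive_val _ _ _ _ _ _ _ (Gf_derive _ (\sum_i expR (mu i / sigma)) sigma x)).
rewrite ![Gf _ sigma x * _]mulrC !mulfK ?G0 //.
by rewrite ler_pM2r ?invr_gt0 // ler_pM2r ?expR_gt0.
Qed.
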